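(* In the setting of the context, with $S,E,I$ as defined there, the function $E(t)+I(t)$ attains its maximum \[ \max_{t\ge0}\bigl(E(t)+I(t)\bigr)=\tilde S+\tilde E+\tilde I-\frac{\gamma}{\beta}\Bigl(1+\log\tilde S-\log\frac{\gamma}{\beta}\Bigr) \] at \[ t=T_3:=\varphi\Bigl(\frac{\gamma}{\beta\tilde S e^{(\beta/\gamma)\tilde R}}\Bigr)=\int_{\gamma/(\beta\tilde S e^{(\beta/\gamma)\tilde R})}^{u_0}\frac{d\xi}{\xi\psi(\xi)}=S^{-1}\Bigl(\frac{\gamma}{\beta}\Bigr). \] Moreover, $E+I$ is increasing on $[0,T_3)$ and decreasing on $(T_3,\infty)$.
   Context: Let $\beta,\gamma,\delta>0$ be constants and $\tilde S,\tilde E,\tilde I,\tilde R$ real numbers with $N:=\tilde S+\tilde E+\tilde I+\tilde R>0$. Standing assumptions: (A1) $\tilde I>0$; (A2) $\tilde E>(\gamma/\delta)\tilde I$; (A3) $\tilde S>\delta\tilde E/(\beta\tilde I)$; (A4) $\tilde R\ge 0$ and $N>\tilde S e^{(\beta/\gamma)\tilde R}+\tilde R$. Let $\alpha$ be the unique solution in $(\tilde R,N)$ of $x=N-\tilde S e^{(\beta/\gamma)\tilde R}e^{-(\beta/\gamma)x}$, and assume (A5) $\tilde S<(\gamma/\beta)e^{(\beta/\gamma)(\alpha-\tilde R)}$. Put $u_0:=e^{-(\beta/\gamma)\tilde R}$, $u_\infty:=e^{-(\beta/\gamma)\alpha}$. Let $\psi$ be the unique function, continuous and positive on $(u_\infty,u_0]$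 and $C^1$ on $(u_\infty,u_0)$, satisfying $\psi'(u)\psi(u)-\frac{\gamma+\delta}{u}\psi(u)=-\delta\,\frac{\beta N-\beta\tilde S e^{(\beta/\gamma)\tilde R}u+\gamma\log u}{u}$ on $(u_\infty,u_0)$ and $\psi(u_0)=\beta\tilde I$. Let $\varphi(u):=\int_u^{u_0}\frac{d\xi}{\xi\psi(\xi)}$; $\varphi$ is a strictly decreasing continuous bijection from $(u_\infty,u_0]$ onto $[0,\infty)$, $C^1$ on $(u_\infty,u_0)$, with inverse $\varphi^{-1}:[0,\infty)\to(u_\infty,u_0]$. For $t\ge 0$ define $S(t)=\tilde S e^{(\beta/\gamma)\tilde R}\varphi^{-1}(t)$, $E(t)=\tilde E e^{-\delta t}+\tilde S e^{(\beta/\gamma)\tilde R}e^{-\delta t}\int_{\varphi^{-1}(t)}^{u_0}e^{\delta\varphi(v)}dv$, $I(t)=N-\tilde S e^{(\beta/\gamma)\tilde R}\varphi^{-1}(t)+\frac{\gamma}{\beta}\log\varphi^{-1}(t)-E(t)$; $S^{-1}$ denotes the inverse of the strictly decreasing function $S$. *)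

(* Defs.v *)
From Stdlib Require Import Reals Lra.
From Coquelicot Require Import Coquelicot.
Open Scope R_scope.

Definition seir_assumptions (beta gamma delta St Et It Rt : R) : Prop :=
  0 < beta /\ 0 < gamma /\ 0 < delta /\
  0 < St + Et + It + Rt /\
  0 < It /\
  Et > (gamma / delta) * It /\
  St > delta * Et / (beta * It) /\
  0 <= Rt /\
  St + Et + It + Rt > St * exp ((beta / gamma) * Rt) + Rt.

(* alpha is a solution in (Rt, N) of x = N - St e^{(beta/gamma)Rt} e^{-(beta/gamma)x}
   (the context asserts it is the unique one). *)
Definition is_alpha (beta gamma St Et It Rt alpha : R) : Prop :=
  Rt < alpha < St + Et + It + Rt /\
  alpha = St + Et + It + Rt
          - St * exp ((beta / gamma) * Rt) * exp (- (beta / gamma) * alpha).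

Definition u0_of (beta gamma Rt : R) : R := exp (- (beta / gamma) * Rt).
Definition uinf_of (beta gamma alpha : R) : R := exp (- (beta / gamma) * alpha).

(* psi: continuous and positive on (uinf, u0], C^1 on (uinf, u0), solving the ODE
   psi' psi - (gamma+delta)/u psi = -delta (beta N - beta St e^{(beta/gamma)Rt} u + gamma log u)/u
   with psi(u0) = beta It.  (The context asserts that this psi is unique.) *)
Definition is_psi (beta gamma delta St Et It Rt alpha : R) (psi : R -> R) : Prop :=
  let N := St + Et + It + Rt in
  let u0 := u0_of beta gamma Rt in
  let uinf := uinf_of beta gamma alpha in
  (forall u, uinf < u < u0 -> continuous psi u) /\
  filterlim psi (at_left u0) (locally (psi u0)) /\
  (forall u, uinf < u <= u0 -> 0 < psi u) /\
  (forall u, uinf < u < u0 -> ex_derive psi u /\ continuous (Derive psi) u) /\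
  (forall u, uinf < u < u0 ->
     Derive psi u * psi u - (gamma + delta) / u * psi u
     = - delta * (beta * N - beta * St * exp ((beta / gamma) * Rt) * u + gamma * ln u) / u) /\
  psi u0 = beta * It.

Definition phi_of (u0 : R) (psi : R -> R) (u : R) : R :=
  RInt (fun xi => / (xi * psi xi)) u u0.

Definition is_phiinv (uinf u0 : R) (psi : R -> R) (phiinv : R -> R) : Prop :=
  forall t, 0 <= t -> uinf < phiinv t <= u0 /\ phi_of u0 psi (phiinv t) = t.

Definition S_fun (beta gamma St Rt : R) (phiinv : R -> R) (t : R) : R :=
  St * exp ((beta / gamma) * Rt) * phiinv t.

Definition E_fun (beta gamma delta St Et Rt : R) (psi phiinv : R -> R) (t : R) : R :=
  let u0 := u0_of beta gamma Rt in
  Et * exp (- delta * t)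
  + St * exp ((beta / gamma) * Rt) * exp (- delta * t)
    * RInt (fun v => exp (delta * phi_of u0 psi v)) (phiinv t) u0.

Definition I_fun (beta gamma delta St Et It Rt : R) (psi phiinv : R -> R) (t : R) : R :=
  let N := St + Et + It + Rt in
  N - St * exp ((beta / gamma) * Rt) * phiinv t + (gamma / beta) * ln (phiinv t)
  - E_fun beta gamma delta St Et Rt psi phiinv t.

(* Main.v *)
Require Import Defs.
From Stdlib Require Import Reals Lra.
From Coquelicot Require Import Coquelicot.
Open Scope R_scope.
Lemma min_cont (c x : R) : continuous (fun y => Rmin y c) x.
Proof.
  apply filterlim_locally. intros eps. exists eps. intros y Hy.
  revert Hy; unfold ball; simpl; unfold AbsRing_ball, abs, minus, plus, opp; simpl.
  intros Hy.
  unfold Rmin; destruct (Rle_dec y c), (Rle_dec x c);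
  apply Rabs_lt_between in Hy; apply Rabs_lt_between; lra.
Qed.

Lemma psim_cont_u0 (psi : R -> R) (u0 : R) :
  filterlim psi (at_left u0) (locally (psi u0)) ->
  continuous (fun y => psi (Rmin y u0)) u0.
Proof.
  intros H. apply filterlim_locally. intros eps.
  apply filterlim_locally with (eps := eps) in H. destruct H as [d Hd].
  exists d. intros y Hy. rewrite (Rmin_left u0 u0) by lra.
  unfold Rmin; destruct (Rle_dec y u0) as [h|h].
  - destruct (Rle_lt_or_eq_dec _ _ h) as [h'|h'].
    + apply Hd; assumption.
    + subst; apply ball_center.
  - apply ball_center.
Qed.

Lemma cont_Rmult (f g : R -> R) x : continuous f x -> continuous g x ->
  continuous (fun y => f y * g y) x.
Proof. intros Hf Hg. exact (continuous_mult (U:=R_UniformSpace) (K:=R_AbsRing) f g x Hf Hg). Qed.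

Definition hI (psi : R -> R) := fun xi : R => / (xi * psi xi).

Lemma h_cont (psi : R -> R) uinf u0 : 0 <= uinf ->
  (forall u, uinf < u < u0 -> continuous psi u) ->
  (forall u, uinf < u <= u0 -> 0 < psi u) ->
  forall z, uinf < z < u0 -> continuous (hI psi) z.
Proof.
  intros H0 Hc Hp z Hz. unfold hI.
  apply continuous_Rinv_comp.
  - apply cont_Rmult; [apply continuous_id | apply Hc; lra].
  - assert (0 < psi z) by (apply Hp; lra). nra.
Qed.

Lemma exint (psi : R -> R) uinf u0 : 0 <= uinf ->
  (forall u, uinf < u < u0 -> continuous psi u) ->
  filterlim psi (at_left u0) (locally (psi u0)) ->
  (forall u, uinf < u <= u0 -> 0 < psi u) ->
  forall a, uinf < a <= u0 -> ex_RInt (hI psi) a u0.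
Proof.
  intros H0 Hc Hl Hp a Ha.
  apply ex_RInt_ext with (f := fun x => / (Rmin x u0 * psi (Rmin x u0))).
  { intros x Hx. rewrite Rmin_left in Hx by lra. rewrite Rmax_right in Hx by lra.
    unfold hI. rewrite Rmin_left by lra. reflexivity. }
  apply (ex_RInt_continuous (V:=R_CompleteNormedModule)). intros z Hz.
  rewrite Rmin_left in Hz by lra. rewrite Rmax_right in Hz by lra.
  assert (Hm : continuous (fun y => psi (Rmin y u0)) z).
  { destruct (Rle_lt_or_eq_dec _ _ (proj2 Hz)) as [h|h].
    - apply continuous_comp with (f := fun y => Rmin y u0) (g := psi).
      + apply min_cont.
      + rewrite Rmin_left by lra. apply Hc; lra.
    - subst z. apply psim_cont_u0; assumption. }
  apply continuous_Rinv_comp.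
  - apply cont_Rmult; [apply min_cont | exact Hm].
  - rewrite Rmin_left by lra. assert (0 < psi z) by (apply Hp; lra). nra.
Qed.

Lemma phi_dec (psi : R -> R) uinf u0 : 0 <= uinf ->
  (forall u, uinf < u < u0 -> continuous psi u) ->
  filterlim psi (at_left u0) (locally (psi u0)) ->
  (forall u, uinf < u <= u0 -> 0 < psi u) ->
  forall a b, uinf < a -> a < b -> b <= u0 -> phi_of u0 psi b < phi_of u0 psi a.
Proof.
  intros H0 Hc Hl Hp a b Ha Hab Hb. unfold phi_of.
  set (c := (a + b) / 2).
  assert (Ea : ex_RInt (hI psi) a u0) by (apply (exint psi uinf); auto; lra).
  assert (Ec : ex_RInt (hI psi) c u0) by (apply (exint psi uinf); auto; unfold c; lra).
  assert (Eb : ex_RInt (hI psi) b u0) by (apply (exint psi uinf); auto; lra).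
  assert (Eac : ex_RInt (hI psi) a c) by (apply (ex_RInt_Chasles_1 (V:=R_CompleteNormedModule)) with u0; auto; unfold c; lra).
  assert (Ecb : ex_RInt (hI psi) c b) by (apply (ex_RInt_Chasles_1 (V:=R_CompleteNormedModule)) with u0; auto; unfold c; lra).
  change (fun xi => / (xi * psi xi)) with (hI psi).
  rewrite <- (RInt_Chasles (V:=R_CompleteNormedModule) (hI psi) a c u0 Eac Ec).
  rewrite <- (RInt_Chasles (V:=R_CompleteNormedModule) (hI psi) c b u0 Ecb Eb).
  assert (P1 : 0 < RInt (hI psi) a c).
  { apply RInt_gt_0. unfold c; lra.
    - intros x Hx. unfold c in Hx. unfold hI. assert (0 < psi x) by (apply Hp; lra).
      apply Rinv_0_lt_compat. nra.
    - intros x Hx. apply (h_cont psi uinf u0); auto; unfold c in *; lra. }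
  assert (P2 : 0 <= RInt (hI psi) c b).
  { apply RInt_ge_0. unfold c; lra. exact Ecb.
    intros x Hx. unfold c in Hx. unfold hI. assert (0 < psi x) by (apply Hp; lra).
    left; apply Rinv_0_lt_compat. nra. }
  unfold plus; simpl. lra.
Qed.

Lemma exp_lnd (u v : R) : 0 < u -> 0 < v -> exp (ln u - ln v) = u / v.
Proof.
  intros. unfold Rminus. rewrite exp_plus, exp_Ropp, !exp_ln by assumption. reflexivity.
Qed.

Lemma F_inc (K c C u v : R) : 0 < K -> 0 < c -> 0 < u -> u < v -> v <= c / K ->
  C - K * u + c * ln u < C - K * v + c * ln v.
Proof.
  intros HK Hc Hu Huv Hv.
  assert (Hl : ln u < ln v) by (apply ln_increasing; lra).
  set (w := ln v - ln u).
  assert (Hw : 0 < w) by (unfold w; lra).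
  assert (E : 1 + (- w) < u / v).
  { rewrite <- exp_lnd by lra. replace (ln u - ln v) with (- w) by (unfold w; ring).
    apply exp_ineq1; lra. }
  assert (E2 : v - v * w < u).
  { apply Rmult_lt_compat_l with (r := v) in E; [|lra].
    replace (v * (u / v)) with u in E by (field; lra). nra. }
  assert (Kv : K * v <= c).
  { apply Rmult_le_compat_l with (r := K) in Hv; [|lra].
    replace (K * (c / K)) with c in Hv by (field; lra). lra. }
  assert (K * (v - u) < c * w) by nra.
  unfold w in *. nra.
Qed.

Lemma F_dec (K c C u v : R) : 0 < K -> 0 < c -> c / K <= u -> u < v ->
  C - K * v + c * ln v < C - K * u + c * ln u.
Proof.
  intros HK Hc Hu Huv.
  assert (Hu0 : 0 < u) by (assert (0 < c / K) by (apply Rdiv_lt_0_compat; lra); lra).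
  assert (Hl : ln u < ln v) by (apply ln_increasing; lra).
  set (w := ln v - ln u).
  assert (Hw : 0 < w) by (unfold w; lra).
  assert (E : 1 + w < v / u).
  { rewrite <- exp_lnd by lra. apply exp_ineq1; lra. }
  assert (E2 : u + u * w < v).
  { apply Rmult_lt_compat_l with (r := u) in E; [|lra].
    replace (u * (v / u)) with v in E by (field; lra). nra. }
  assert (Ku : c <= K * u).
  { apply Rmult_le_compat_l with (r := K) in Hu; [|lra].
    replace (K * (c / K)) with c in Hu by (field; lra). lra. }
  assert (c * w < K * (v - u)) by nra.
  unfold w in *. nra.
Qed.

Lemma F_max (K c C u : R) : 0 < K -> 0 < c -> 0 < u ->
  C - K * u + c * ln u <= C - K * (c / K) + c * ln (c / K).
Proof.
  intros HK Hc Hu. destruct (Rtotal_order u (c / K)) as [h|[h|h]].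
  - left. apply F_inc; lra.
  - subst; lra.
  - left. apply F_dec; lra.
Qed.

Theorem theorem11 (beta gamma delta St Et It Rt alpha : R) (psi phiinv : R -> R) :
  seir_assumptions beta gamma delta St Et It Rt ->
  is_alpha beta gamma St Et It Rt alpha ->
  St < (gamma / beta) * exp ((beta / gamma) * (alpha - Rt)) ->            (* A5 *)
  is_psi beta gamma delta St Et It Rt alpha psi ->
  is_phiinv (uinf_of beta gamma alpha) (u0_of beta gamma Rt) psi phiinv ->
  let u0 := u0_of beta gamma Rt in
  let EI := fun t => E_fun beta gamma delta St Et Rt psi phiinv t
                     + I_fun beta gamma delta St Et It Rt psi phiinv t in
  let T3 := phi_of u0 psi (gamma / (beta * St * exp ((beta / gamma) * Rt))) in
  0 <= T3 /\
  S_fun beta gamma St Rt phiinv T3 = gamma / beta /\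
  (forall t, 0 <= t -> EI t <= EI T3) /\
  EI T3 = St + Et + It - (gamma / beta) * (1 + ln St - ln (gamma / beta)) /\
  (forall s t, 0 <= s -> s < t -> t < T3 -> EI s < EI t) /\
  (forall s t, T3 < s -> s < t -> EI t < EI s).
Proof.
  intros HA Hal HA5 Hpsi Hinv u0 EI T3.
  destruct HA as (Hb & Hg & Hd & HN & HI & HA2 & HA3 & HR & HA4).
  destruct Hal as [[Hal1 Hal2] _]. unfold is_phiinv in Hinv.
  destruct Hpsi as (Pc & Pl & Pp & _ & _ & _). change (u0_of beta gamma Rt) with u0 in Pc, Pl, Pp, Hinv.
  set (uinf := uinf_of beta gamma alpha) in *.
  set (Ex := exp ((beta / gamma) * Rt)) in *.
  set (K := St * Ex).
  set (c := gamma / beta).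
  set (ustar := gamma / (beta * St * Ex)) in *.
  assert (HEx : 0 < Ex) by apply exp_pos.
  assert (Hc : 0 < c) by (unfold c; apply Rdiv_lt_0_compat; lra).
  assert (HSt : c < St).
  { assert (h1 : gamma * It < delta * Et).
    { apply Rmult_lt_compat_l with (r := delta) in HA2; [|lra].
      replace (delta * (gamma / delta * It)) with (gamma * It) in HA2 by (field; lra). lra. }
    assert (h2 : c < delta * Et / (beta * It)).
    { unfold c. apply Rmult_lt_reg_r with (r := beta * It). nra.
      replace (gamma / beta * (beta * It)) with (gamma * It) by (field; lra).
      replace (delta * Et / (beta * It) * (beta * It)) with (delta * Et) by (field; lra).
      lra. }
    lra. }
  assert (HStp : 0 < St) by lra.
  assert (HK : 0 < K) by (unfold K; nra).
  assert (Hus : ustar = c / K) by (unfold ustar, c, K; field; lra).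
  assert (Hu0 : u0 = / Ex).
  { unfold u0, u0_of, Ex. replace (- (beta / gamma) * Rt) with (- ((beta / gamma) * Rt)) by ring.
    apply exp_Ropp. }
  assert (Huinf0 : 0 < uinf) by (unfold uinf, uinf_of; apply exp_pos).
  assert (Hus_u0 : ustar < u0).
  { rewrite Hus, Hu0. unfold K. apply Rmult_lt_reg_r with (r := St * Ex). nra.
    replace (c / (St * Ex) * (St * Ex)) with c by (field; lra).
    replace (/ Ex * (St * Ex)) with St by (field; lra). lra. }
  assert (Huinf_us : uinf < ustar).
  { assert (Hq : uinf * exp ((beta / gamma) * (alpha - Rt)) * Ex = 1).
    { unfold uinf, uinf_of, Ex. rewrite <- !exp_plus. rewrite <- exp_0. f_equal. ring. }
    rewrite Hus. unfold K.
    apply Rmult_lt_reg_r with (r := St * Ex). nra.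
    replace (c / (St * Ex) * (St * Ex)) with c by (field; lra).
    assert (0 < exp ((beta / gamma) * (alpha - Rt))) by apply exp_pos.
    assert (uinf * Ex * (c * exp ((beta / gamma) * (alpha - Rt))) = c) by
      (transitivity (c * (uinf * exp ((beta / gamma) * (alpha - Rt)) * Ex)); [ring| rewrite Hq; ring]).
    unfold c in *. nra. }
  assert (Huinf_u0 : uinf < u0) by lra.
  assert (Hdec : forall a b, uinf < a -> a < b -> b <= u0 -> phi_of u0 psi b < phi_of u0 psi a).
  { intros a b. apply (phi_dec psi uinf u0); try lra; auto. }
  assert (Hphi0 : phi_of u0 psi u0 = 0).
  { unfold phi_of. rewrite RInt_point. reflexivity. }
  assert (Hinj : forall a b, uinf < a <= u0 -> uinf < b <= u0 -> phi_of u0 psi a = phi_of u0 psi b -> a = b).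
  { intros a b Ha Hb' Heq. destruct (Rtotal_order a b) as [h|[h|h]]; auto.
    - pose proof (Hdec a b ltac:(lra) h ltac:(lra)). lra.
    - pose proof (Hdec b a ltac:(lra) h ltac:(lra)). lra. }
  assert (Hpdec : forall s t, 0 <= s -> s < t -> phiinv t < phiinv s).
  { intros s t Hs Hst.
    destruct (Hinv s Hs) as [Hs1 Hs2]. destruct (Hinv t ltac:(lra)) as [Ht1 Ht2].
    destruct (Rtotal_order (phiinv t) (phiinv s)) as [h|[h|h]]; auto.
    - rewrite h in Ht2. lra.
    - pose proof (Hdec (phiinv s) (phiinv t) ltac:(lra) h ltac:(lra)). lra. }
  assert (HT3 : 0 < T3).
  { unfold T3. rewrite <- Hphi0. apply Hdec; lra. }
  assert (HuT3 : phiinv T3 = ustar).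
  { destruct (Hinv T3 ltac:(lra)) as [h1 h2]. apply Hinj; try lra. rewrite h2. reflexivity. }
  assert (HEI : forall t, EI t = (St + Et + It + Rt) - K * phiinv t + c * ln (phiinv t)).
  { intros t. unfold EI, I_fun, K, c, Ex. ring. }
  assert (Hpos : forall t, 0 <= t -> 0 < phiinv t).
  { intros t ht. destruct (Hinv t ht). lra. }
  split; [lra|]. split.
  { unfold S_fun. fold Ex. rewrite HuT3, Hus. unfold K. field. lra. }
  split.
  { intros t ht. rewrite !HEI, HuT3, Hus. apply F_max; auto. }
  split.
  { rewrite HEI, HuT3, Hus.
    replace (K * (c / K)) with c by (field; lra).
    replace (c / K) with (c * (/ St * / Ex)) by (unfold K; field; lra).
    rewrite ln_mult, ln_mult, ln_Rinv, ln_Rinv; try lra;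
      try (apply Rinv_0_lt_compat; lra);
      try (apply Rmult_lt_0_compat; apply Rinv_0_lt_compat; lra).
    unfold Ex. rewrite ln_exp. unfold c. field. lra. }
  split.
  { intros s t Hs Hst HtT. rewrite !HEI.
    pose proof (Hpdec s t Hs Hst). pose proof (Hpdec t T3 ltac:(lra) HtT).
    rewrite HuT3, Hus in *. apply F_dec; lra. }
  { intros s t HsT Hst. rewrite !HEI.
    pose proof (Hpdec s t ltac:(lra) Hst). pose proof (Hpdec T3 s ltac:(lra) HsT).
    pose proof (Hpos t ltac:(lra)).
    rewrite HuT3, Hus in *. apply F_inc; lra. }
Qed.
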